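(* Let $K_{A_1,B_1},\ldots,K_{A_q,B_q}$ be demand graphs with $|A_i|=\alpha$, $|B_i|=\beta$, reordered such that $\mathrm{mincut}_G(K_{A_1,B_1})< \ldots < \mathrm{mincut}_G(K_{A_q,B_q})$. Then the polynomials $P_{1}, \ldots, P_{q}$ are linearly independent.
   Context: $G=(V,E,w)$ is an undirected edge-weighted graph. For a partition $\Pi$ of $V$, $\Pi(v)$ is the part containing $v$, and $\mathrm{cut}_G(\Pi)=\sum_{uv\in E:\Pi(u)\neq\Pi(v)} w(uv)$. A partition agrees with a demand graph $D$ if every $uv\in D$ has $\Pi(u)\neq\Pi(v)$, and $\mathrm{mincut}_G(D)$ is the minimum of $\mathrm{cut}_G(\Pi)$ over partitions agreeing with $D$. For disjoint $A,B\subseteq V$, $K_{A,B}$ is the complete bipartite demand graph between $A$ and $B$; an optimal partition may be assumed to have two parts. Each vertex $v$ gets a variable $\phi_v$; a two-part partition $\{U,V\setminus U\}$ is viewed as a $0/1$ vector in $\{0,1\}^n$ at which polynomials are evaluated over $\mathbb{F}_2$. For each $j$, fix $a_j\in A_j$, $b_j\in B_j$ and define $P_j=\prod_{b\in B_j}(\phi_{a_j}-\phi_b)\cdot\prod_{a\in A_j\setminus\{a_j\}}(\phi_a-\phi_{b_j})$, a polynomial of degree $\alpha+\beta-1$. A two-part partition agrees with $K_{A_j,B_j}$ iff $P_j$ evaluated at it is nonzero. *)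

(* Defs.v *)
From HB Require Import structures.
From mathcomp Require Import all_boot all_order all_algebra.
From mathcomp Require Import mpoly.
Set Implicit Arguments. Unset Strict Implicit. Unset Printing Implicit Defensive.
Import Order.TTheory GRing.Theory Num.Theory.
Local Open Scope ring_scope.

(* Graph G on vertex set 'I_n: the weight of the (undirected) edge {u,v}
   (u < v) is w u v; absent edges have weight 0. Weights are nonnegative
   (hypothesis in the theorem).
   A partition of V is represented by a labelling Pi : 'I_n -> 'I_n
   (vertices with equal labels are in the same part; every partition of an
   n-element set arises this way). *)

Definition cut (R : numDomainType) (n : nat) (w : 'I_n -> 'I_n -> R)
    (Pi : 'I_n -> 'I_n) : R :=
  \sum_(u : 'I_n) \sum_(v : 'I_n | (u < v)%N && (Pi u != Pi v)) w u v.

Definition agrees (n : nat) (D : rel 'I_n) (Pi : 'I_n -> 'I_n) : Prop :=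
  forall u v, D u v -> Pi u != Pi v.

Definition is_mincut (R : numDomainType) (n : nat) (w : 'I_n -> 'I_n -> R)
    (D : rel 'I_n) (m : R) : Prop :=
  (exists Pi, agrees D Pi /\ cut w Pi = m) /\
  (forall Pi, agrees D Pi -> m <= cut w Pi).

Definition Kbip (n : nat) (A B : {set 'I_n}) : rel 'I_n :=
  fun u v => ((u \in A) && (v \in B)) || ((u \in B) && (v \in A)).

Definition Ppoly (n : nat) (A B : {set 'I_n}) (a b : 'I_n) : {mpoly 'F_2[n]} :=
  (\prod_(x in B) ('X_a - 'X_x)) * (\prod_(x in A | x != a) ('X_x - 'X_b)).

(* Main.v *)
Require Import Defs.
From HB Require Import structures.
From mathcomp Require Import all_boot all_order all_algebra.
From mathcomp Require Import mpoly.
Import Order.TTheory GRing.Theory Num.Theory.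
Set Implicit Arguments. Unset Strict Implicit.
Local Open Scope ring_scope.

Lemma F2sub (b1 b2 : bool) : (((b1%:R : 'F_2) - b2%:R) != 0) = (b1 != b2).
Proof.
rewrite subr_eq0.
by case: b1; case: b2; rewrite /= ?eqxx //= ?oner_eq0 // eq_sym oner_eq0.
Qed.

Definition xU n (U : {set 'I_n}) : 'I_n -> 'F_2 := fun v => (v \in U)%:R.

Lemma Peval_eq n (A B : {set 'I_n}) a b (U : {set 'I_n}) :
  (Ppoly A B a b).@[xU U] =
  (\prod_(x in B) (xU U a - xU U x)) * (\prod_(x in A | x != a) (xU U x - xU U b)).
Proof.
rewrite /Ppoly mevalM !rmorph_prod /=.
by congr (_ * _); apply: eq_bigr => x _; rewrite mevalB !mevalXU.
Qed.

Lemma Peval_agree n (A B : {set 'I_n}) a b (U : {set 'I_n}) :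
  (Ppoly A B a b).@[xU U] != 0 -> a \in A -> b \in B ->
  forall u v, u \in A -> v \in B -> (u \in U) != (v \in U).
Proof.
rewrite Peval_eq mulf_eq0 negb_or => /andP[].
rewrite !prodf_seq_neq0 => /allP H1 /allP H2 Ha Hb u v Hu Hv.
have Hav : (a \in U) != (v \in U).
  by have := H1 v; rewrite mem_index_enum Hv /= => /(_ isT); rewrite F2sub.
have Hab : (a \in U) != (b \in U).
  by have := H1 b; rewrite mem_index_enum Hb /= => /(_ isT); rewrite F2sub.
have [->|Hua] := eqVneq u a; first by [].
have Hub : (u \in U) != (b \in U).
  by have := H2 u; rewrite mem_index_enum Hu Hua /= => /(_ isT); rewrite F2sub.
move: Hav Hab Hub.
by case: (u \in U); case: (v \in U); case: (a \in U); case: (b \in U).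
Qed.

Lemma Peval_self n (A B : {set 'I_n}) a b (U : {set 'I_n}) :
  A \subset U -> [disjoint B & U] -> a \in A -> b \in B ->
  (Ppoly A B a b).@[xU U] != 0.
Proof.
move=> HAU HBU Ha Hb.
have inU x : x \in A -> x \in U by move=> /(subsetP HAU).
have notU x : x \in B -> x \notin U by move=> Hx; rewrite (disjointFr HBU Hx).
rewrite Peval_eq mulf_neq0 // prodf_seq_neq0; apply/allP => x _; apply/implyP => Hx.
  by rewrite F2sub inU // (negbTE (notU _ Hx)).
by move: Hx => /andP[Hx _]; rewrite F2sub inU // (negbTE (notU _ Hb)).
Qed.
Definition Lab n (U : {set 'I_n}) (a0 b0 : 'I_n) : 'I_n -> 'I_n :=
  fun v => if v \in U then a0 else b0.

Lemma Lab_neq n (U : {set 'I_n}) a0 b0 u v : a0 != b0 ->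
  (Lab U a0 b0 u != Lab U a0 b0 v) = ((u \in U) != (v \in U)).
Proof.
rewrite /Lab => H; case: (u \in U); case: (v \in U); rewrite ?eqxx //.
by rewrite eq_sym.
Qed.

Lemma Lab_agrees n (A B U : {set 'I_n}) a0 b0 : a0 != b0 ->
  (forall u v, u \in A -> v \in B -> (u \in U) != (v \in U)) ->
  agrees (Kbip A B) (Lab U a0 b0).
Proof.
move=> Hab H u v; rewrite /Kbip Lab_neq // => /orP[/andP[Hu Hv]|/andP[Hu Hv]].
  exact: H.
by rewrite eq_sym; apply: H.
Qed.

Lemma cut_Lab (R : realDomainType) n (w : 'I_n -> 'I_n -> R) (U : {set 'I_n})
  a0 b0 (Pi : 'I_n -> 'I_n) :
  (forall u v, 0 <= w u v) ->
  (forall u v, Pi u = Pi v -> (u \in U) = (v \in U)) ->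
  cut w (Lab U a0 b0) <= cut w Pi.
Proof.
move=> Hw HU; rewrite /cut; apply: ler_sum => u _.
rewrite [X in X <= _]big_mkcond [X in _ <= X]big_mkcond /=.
apply: ler_sum => v _.
case: ((u < v)%N) => //=.
case: eqP => [E|NE]; first by case: ifP.
case: eqP => [E2|_] //; exfalso; apply: NE.
by rewrite /Lab (HU _ _ E2).
Qed.
Unset Implicit Arguments. Set Strict Implicit.
Theorem lemma6 (R : realDomainType) (n : nat) (w : 'I_n -> 'I_n -> R)
  (q alpha beta : nat) (A B : 'I_q -> {set 'I_n}) (a b : 'I_q -> 'I_n)
  (m : 'I_q -> R) :
  (forall u v, 0 <= w u v) ->
  (forall i, [disjoint A i & B i]) ->
  (forall i, #|A i| = alpha) ->
  (forall i, #|B i| = beta) ->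
  (forall i, a i \in A i) ->
  (forall i, b i \in B i) ->
  (forall i, is_mincut w (Kbip (A i) (B i)) (m i)) ->
  (forall i j : 'I_q, (i < j)%N -> m i < m j) ->
  forall c : 'I_q -> 'F_2,
    \sum_(i < q) c i *: Ppoly (A i) (B i) (a i) (b i) = 0 ->
    forall i, c i = 0.
Proof.
move=> Hw Hdis _ _ Ha Hb Hmin Hm c Hsum i.
apply/eqP; apply/negPn/negP => Hci.
case: (@arg_minnP _ i (fun j => c j != 0) val Hci) => i0 Hc0 Hmin0.
have [[Pi [HPi HcutPi]] _] := Hmin i0.
set U := [set v | [exists u in A i0, Pi u == Pi v]].
have HU : forall u v, Pi u = Pi v -> (u \in U) = (v \in U).
  by move=> u v E; rewrite !inE; apply: eq_existsb => x; rewrite E.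
have Hab0 : a i0 != b i0.
  apply/negP => /eqP E; have := Hdis i0; rewrite disjoint_sym => /disjointFr.
  by move=> /(_ _ (Hb i0)); rewrite -E Ha.
have Hcut := cut_Lab (a i0) (b i0) Hw HU.
have Hkill : forall j : 'I_q, (i0 < j)%N -> (Ppoly (A j) (B j) (a j) (b j)).@[xU U] = 0.
  move=> j Hj; apply/eqP/negPn/negP => HP.
  have Hag := Lab_agrees Hab0 (Peval_agree HP (Ha j) (Hb j)).
  have [_ Hle] := Hmin j.
  have := Hm _ _ Hj; rewrite ltNge => /negP; apply.
  by rewrite -HcutPi; apply: le_trans (Hle _ Hag) Hcut.
have Hself : (Ppoly (A i0) (B i0) (a i0) (b i0)).@[xU U] != 0.
  apply: Peval_self => //.
    by apply/subsetP => x Hx; rewrite inE; apply/existsP; exists x; rewrite Hx eqxx.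
  rewrite disjoint_sym; apply/pred0P => v /=; apply/negbTE/negP => /andP[].
  rewrite inE => /existsP[u /andP[Hu /eqP E]] Hv.
  by move: (HPi u v); rewrite /Kbip Hu Hv E eqxx => /(_ isT).
have := congr1 (meval (xU U)) Hsum.
rewrite raddf_sum meval0 (bigD1 i0) //= big1 ?addr0.
  by rewrite mevalZ => /eqP; rewrite mulf_eq0 (negbTE Hc0) (negbTE Hself).
move=> j Hj; rewrite mevalZ.
have [Hcj|Hcj] := eqVneq (c j) 0; first by rewrite Hcj mul0r.
rewrite Hkill ?mulr0 //.
have := Hmin0 _ Hcj; rewrite leq_eqVlt => /orP[/eqP E|//].
by move: Hj; rewrite (_ : j = i0) ?eqxx //; apply: val_inj.
Qed.
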